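(* Suppose $p\neq2$ and let $\nu\in\widehat{\mathbb{F}_q^\times}$ with $\nu\neq\varepsilon$. Then $$\frac{1}{1-q}\sum_{\eta\in\widehat{\mathbb{F}_q^\times}}F_2\!\left({\varepsilon;\overline{\eta},\overline{\nu}\eta\atop\varepsilon,\varepsilon};\frac12,\frac12\right)=-1.$$
   Context: $\mathbb{F}_q$ is a finite field with $q$ elements and characteristic $p$. $\widehat{\mathbb{F}_q^\times}$ is the group of multiplicative characters $\mathbb{F}_q^\times\to\overline{\mathbb{Q}}^\times$, $\varepsilon$ the trivial character; every character $\eta$ (including $\varepsilon$) is extended by $\eta(0)=0$; $\overline{\eta}=\eta^{-1}$; $\delta(\eta)=1$ if $\eta=\varepsilon$, else $0$. $\psi$ is a fixed non-trivial additive character. $g(\eta)=-\sum_{x\in\mathbb{F}_q^\times}\psi(x)\eta(x)$, $g^\circ(\eta)=q^{\delta(\eta)}g(\eta)$, $(\alpha)_\mu=g(\alpha\mu)/g(\alpha)$, $(\alpha)^\circ_\mu=g^\circ(\alpha\mu)/g^\circ(\alpha)$. Appell's function: for $x,y\in\mathbb{F}_q$, $F_2\!\left({\alpha;\beta_1,\beta_2\atop\gamma_1,\gamma_2};x,y\right)=\frac{1}{(1-q)^2}\sum_{\nu_1,\nu_2\in\widehat{\mathbb{F}_q^\times}}\frac{(\alpha)_{\nu_1\nu_2}(\beta_1)_{\nu_1}(\beta_2)_{\nu_2}}{(\gamma_1)^\circ_{\nu_1}(\gamma_2)^\circ_{\nu_2}(\varepsilon)^\circ_{\nu_1}(\varepsilon)^\circ_{\nu_2}}\nu_1(x)\nu_2(y)$.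 *)

(* Defs.v *)
From HB Require Import structures.
From mathcomp Require Import all_boot all_order all_algebra all_fingroup all_solvable all_field all_character.
Set Implicit Arguments. Unset Strict Implicit. Unset Printing Implicit Defensive.
Import GRing.Theory Num.Theory.
Local Open Scope ring_scope.

(* Multiplicative characters of F_q^x are the irreducible (= linear, the group
   being abelian) characters of the finite group {unit F}, valued in algC
   (algebraic closure of Q).  A class function phi on {unit F} is extended to F
   by phi(0) = 0. *)
Section FF.
Variable F : finFieldType.

Definition UG := [set: {unit F}]%G.

Definition chx (phi : 'CF(UG)) (x : F) : algC :=
  if [pick u : {unit F} | val u == x] is Some u then phi u else 0.

Definition qF : algC := (#|F|)%:R.

Definition delta (phi : 'CF(UG)) : nat := (phi == 1).

Variable psi : F -> algC.

Definition gauss (phi : 'CF(UG)) : algC :=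
  - \sum_(x : F | x != 0) psi x * chx phi x.

Definition gaussc (phi : 'CF(UG)) : algC := qF ^+ delta phi * gauss phi.

Definition poch (a m : 'CF(UG)) : algC := gauss (a * m) / gauss a.
Definition pochc (a m : 'CF(UG)) : algC := gaussc (a * m) / gaussc a.

Definition appellF2 (a b1 b2 c1 c2 : 'CF(UG)) (x y : F) : algC :=
  (1 - qF)^-2 * \sum_(i : Iirr UG) \sum_(j : Iirr UG)
    (poch a ('chi_i * 'chi_j) * poch b1 'chi_i * poch b2 'chi_j
     / (pochc c1 'chi_i * pochc c2 'chi_j * pochc 1 'chi_i * pochc 1 'chi_j)
     * chx 'chi_i x * chx 'chi_j y).

End FF.

Definition additive_char (F : finFieldType) (psi : F -> algC) : Prop :=
  (forall x y, psi (x + y) = psi x * psi y) /\ psi 0 = 1 /\ exists x, psi x != 1.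

(* Main.v *)
Require Import Defs.
From HB Require Import structures.
From mathcomp Require Import all_boot all_order all_algebra all_fingroup all_solvable all_field all_character.
From mathcomp Require Import ring.
Import GRing.Theory Num.Theory.
Local Open Scope ring_scope.


Section Basics.
Variable F : finFieldType.

Lemma UG_abelian : abelian (UG F).
Proof. apply/centsP => u _ w _; apply: val_inj; rewrite !FinRing.val_unitM; exact: mulrC. Qed.

Lemma chxE (phi : 'CF(UG F)) (u : {unit F}) : chx phi (val u) = phi u.
Proof.
rewrite /chx; case: pickP => [w /eqP/val_inj -> // | /(_ u)]; by rewrite eqxx.
Qed.

Lemma chx0 (phi : 'CF(UG F)) : chx phi 0 = 0.
Proof.
rewrite /chx; case: pickP => // w /eqP w0.
by have := valP w; rewrite /= w0 unitr0.
Qed.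

Lemma unit_ex {x : F} : x != 0 -> exists u : {unit F}, x = val u.
Proof. move=> x0; have ux : x \is a GRing.unit by rewrite unitfE. by exists (FinRing.unit F ux). Qed.

Definition Mul (f : F -> algC) :=
  [/\ forall x y, f (x * y) = f x * f y, f 1 = 1, f 0 = 0 & forall x, f x^-1 = (f x)^*].

Lemma Mul_lin {phi : 'CF(UG F)} : phi \is a linear_char -> Mul (chx phi).
Proof.
move=> lin; have inU (u : {unit F}) : u \in UG F by rewrite inE.
split.
- move=> x y; have [->|x0] := eqVneq x 0; first by rewrite mul0r chx0 mul0r.
  have [->|y0] := eqVneq y 0; first by rewrite mulr0 chx0 mulr0.
  have [u ->] := unit_ex x0; have [w ->] := unit_ex y0.
  by rewrite -FinRing.val_unitM !chxE (lin_charM lin).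
- by rewrite -FinRing.val_unit1 chxE lin_char1.
- exact: chx0.
- move=> x; have [->|x0] := eqVneq x 0; first by rewrite invr0 chx0 conjC0.
  have [u ->] := unit_ex x0.
  by rewrite -FinRing.val_unitV !chxE lin_charV_conj.
Qed.

Lemma Mul_M f g : Mul f -> Mul g -> Mul (fun x => f x * g x).
Proof.
case=> fM f1 f0 fV [gM g1 g0 gV]; split.
- by move=> x y; rewrite fM gM; ring.
- by rewrite f1 g1 mulr1.
- by rewrite f0 mul0r.
- by move=> x; rewrite fV gV rmorphM.
Qed.

Lemma Mul_C f : Mul f -> Mul (fun x => (f x)^*).
Proof.
case=> fM f1 f0 fV; split.
- by move=> x y; rewrite fM rmorphM.
- by rewrite f1 conjC1.
- by rewrite f0 conjC0.
- by move=> x; rewrite fV.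
Qed.

Definition onef (x : F) : algC := (x != 0)%:R.

Lemma Mul_one : Mul onef.
Proof.
rewrite /onef; split.
- by move=> x y; rewrite mulf_eq0 negb_or -mulnb natrM.
- by rewrite oner_neq0.
- by rewrite eqxx.
- by move=> x; rewrite invr_eq0 conjC_nat.
Qed.

Lemma chxM (a b : 'CF(UG F)) x : chx (a * b) x = chx a x * chx b x.
Proof.
have [->|x0] := eqVneq x 0; first by rewrite !chx0 mul0r.
by have [u ->] := unit_ex x0; rewrite !chxE cfunE.
Qed.

Lemma chxC (a : 'CF(UG F)) x : chx (a^*)%CF x = (chx a x)^*.
Proof.
have [->|x0] := eqVneq x 0; first by rewrite !chx0 conjC0.
by have [u ->] := unit_ex x0; rewrite !chxE cfunE.
Qed.

Lemma chx1 x : chx (1 : 'CF(UG F)) x = onef x.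
Proof.
rewrite /onef; have [->|x0] := eqVneq x 0; first by rewrite !chx0.
by have [u ->] := unit_ex x0; rewrite !chxE cfun1E inE.
Qed.

Lemma lin_irr (i : Iirr (UG F)) : 'chi_i \is a linear_char.
Proof. exact: (char_abelianP _ UG_abelian). Qed.

Lemma Mul_chi (i : Iirr (UG F)) : Mul (chx 'chi_i).
Proof. exact/Mul_lin/lin_irr. Qed.

Definition nn : algC := qF F - 1.

Lemma orthoI (z : F) : \sum_(i : Iirr (UG F)) chx 'chi_i z = nn * (z == 1)%:R.
Proof.
have [->|z0] := eqVneq z 0.
  rewrite big1 => [|i _]; last by rewrite chx0.
  by rewrite eq_sym oner_eq0 mulr0.
have [u ->] := unit_ex z0.
transitivity (\sum_(i : Iirr (UG F)) 'chi_i u * ('chi_i 1%g)^*).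
  by apply: eq_bigr => i _; rewrite chxE (lin_char1 (lin_irr i)) conjC1 mulr1.
rewrite second_orthogonality_relation ?group1 // class1G inE.
have [->|nu] := eqVneq u 1%g; last first.
  have /negbTE -> : val u != 1 by apply: contra nu => /eqP h; apply/eqP/val_inj.
  by rewrite mulr0.
rewrite eqxx cent11T setIT card_finField_unit /nn /qF mulr1.
have h : (0 < #|F|)%N by apply/card_gt0P; exists 0.
rewrite -(prednK h) /= -natr1 addrK. by rewrite mulr1n.
Qed.


Lemma sum_delta (f : F -> algC) (y : F) : \sum_x f x * (x == y)%:R = f y.
Proof.
rewrite (bigD1 y) //= eqxx mulr1 big1 ?addr0 // => x /negbTE ->; by rewrite mulr0.
Qed.

Lemma delta1 (f : F -> algC) (p : F) :
  \sum_b f b * (p * b == 1)%:R = (p != 0)%:R * f p^-1.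
Proof.
have [->|p0] := eqVneq p 0.
  rewrite mul0r big1 // => b _; by rewrite mul0r eq_sym oner_eq0 mulr0.
rewrite mul1r -(sum_delta f p^-1); apply: eq_bigr => b _; congr (_ * (nat_of_bool _)%:R).
by apply/idP/idP => /eqP h; apply/eqP; [rewrite -(mulKf p0 b) h mulr1 | rewrite h mulfV].
Qed.

Lemma delta2 (f : F -> algC) (p : F) :
  \sum_b f b * (b^-1 * p == 1)%:R = (p != 0)%:R * f p.
Proof.
have [->|p0] := eqVneq p 0.
  rewrite mul0r big1 // => b _; by rewrite mulr0 eq_sym oner_eq0 mulr0.
rewrite mul1r -(sum_delta f p); apply: eq_bigr => b _; congr (_ * (nat_of_bool _)%:R).
apply/idP/idP => /eqP h; apply/eqP; last by rewrite h mulVf.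
have b0 : b != 0.
  by apply/eqP => b0; move: h; rewrite b0 invr0 mul0r => /eqP; rewrite eq_sym oner_eq0.
by rewrite -[b]mulr1 -h mulVKf.
Qed.

End Basics.
Arguments Mul {F}. Arguments onef {F}.
Arguments sum_delta {F}. Arguments delta1 {F}. Arguments delta2 {F}.
Arguments chxE {F}. Arguments chx0 {F}. Arguments Mul_lin {F phi}. Arguments Mul_M {F f g}.
Arguments Mul_C {F f}. Arguments Mul_one {F}. Arguments chxM {F}. Arguments chxC {F}.
Arguments chx1 {F}. Arguments lin_irr {F}. Arguments Mul_chi {F}. Arguments orthoI {F}.


Section Psi.
Variables (F : finFieldType) (psi : F -> algC).
Hypotheses (psiD : forall x y, psi (x + y) = psi x * psi y) (psi0 : psi 0 = 1)
  (psinz : exists x, psi x != 1).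
Local Notation q := (qF F).
Local Notation n := (nn F).

Definition Gs (f : F -> algC) := - \sum_x psi x * f x.

Lemma Gs_ext {f g : F -> algC} : f =1 g -> Gs f = Gs g.
Proof. by move=> fg; rewrite /Gs; congr (- _); apply: eq_bigr => x _; rewrite fg. Qed.

Lemma gaussE phi : gauss psi phi = Gs (chx phi).
Proof.
rewrite /gauss /Gs big_mkcond /=; congr (- _); apply: eq_bigr => x _.
by have [->|] := eqVneq x 0; rewrite ?chx0 ?mulr0.
Qed.

Lemma sum_psi0 : \sum_x psi x = 0.
Proof.
case: psinz => x0 hx0; set S := \sum_x psi x.
have h : psi x0 * S = S.
  rewrite /S mulr_sumr [RHS](reindex_inj (addrI x0)) /=.
  by apply: eq_bigr => x _; rewrite psiD.
have : (psi x0 - 1) * S = 0 by rewrite mulrBl h mul1r subrr.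
by move/eqP; rewrite mulf_eq0 subr_eq0 (negbTE hx0) => /eqP.
Qed.

Lemma sum_psi c : \sum_x psi (c * x) = q * (c == 0)%:R.
Proof.
have [->|c0] := eqVneq c 0.
  rewrite mulr1; under eq_bigr do rewrite mul0r psi0.
  by rewrite sumr_const.
rewrite mulr0 ; transitivity (\sum_x psi x); last exact: sum_psi0.
by rewrite [X in _ = X](reindex_inj (mulfI c0)).
Qed.

Lemma q_neq0 : q != 0.
Proof. by rewrite /qF pnatr_eq0 -lt0n; apply/card_gt0P; exists 0. Qed.

Lemma n_neq0 : n != 0.
Proof.
rewrite /nn subr_eq0 /qF -[X in _ == X]/(1%:R : algC) eqr_nat.
have : (1 < #|F|)%N by apply/card_gt1P; exists 0, 1; split => //; rewrite eq_sym oner_neq0.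
by case: #|F| => [|[|]].
Qed.

Lemma twist {b : F -> algC} c : Mul b ->
  \sum_a psi (a * c) * b a = (c == 0)%:R * \sum_a b a - b c^-1 * Gs b.
Proof.
case=> bM b1 b0 bV.
have [->|c0] := eqVneq c 0.
  rewrite invr0 b0 mul0r subr0 mul1r; apply: eq_bigr => a _.
  by rewrite mulr0 psi0 mul1r.
rewrite mul0r sub0r /Gs mulrN opprK mulr_sumr.
rewrite (reindex_inj (mulfI (invr_neq0 c0))) /=.
apply: eq_bigr => a _; rewrite bM (mulrC c^-1) mulfVK //; ring.
Qed.


Lemma lemB {b v : F -> algC} : Mul b -> Mul v ->
  Gs (fun x => b x * v x) * Gs (fun x => (v x)^*) * v (-1) =
  \sum_a b a - Gs b * \sum_x v x * b ((1 - x^-1)^-1).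
Proof.
move=> Mb Mv; case: (Mb) => bM b1 b0 bV; case: (Mv) => vM v1 v0 vV.
have step1 : Gs (fun x => b x * v x) * Gs (fun x => (v x)^*) * v (-1) =
    \sum_a \sum_c psi a * psi c * b a * v (- (a * c^-1)).
  rewrite /Gs mulrNN mulr_suml mulr_suml; apply: eq_bigr => a _.
  rewrite mulr_sumr mulr_suml; apply: eq_bigr => c _.
  have -> : - (a * c^-1) = a * c^-1 * (-1) by rewrite mulrN1.
  by rewrite -vV !vM; ring.
have step2 : forall a, \sum_c psi a * psi c * b a * v (- (a * c^-1)) =
    \sum_x psi (a * (1 - x^-1)) * b a * v x.
  move=> a; have [->|a0] := eqVneq a 0.
    by rewrite b0 !big1 // => x _; rewrite !mulr0 mul0r.
  have inj : injective (fun x : F => - (a * x^-1)).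
    by move=> x y /oppr_inj /(mulfI a0) /invr_inj.
  rewrite (reindex_inj inj) /=; apply: eq_bigr => x _.
  rewrite invrN invfM invrK mulrN opprK mulrA mulfV // mul1r.
  by rewrite mulrBr mulr1 psiD.
rewrite step1 (eq_bigr _ (fun a _ => step2 a)) exchange_big /=.
transitivity (\sum_x v x * ((1 - x^-1 == 0)%:R * \sum_a b a - b (1 - x^-1)^-1 * Gs b)).
  apply: eq_bigr => x _; rewrite -twist // mulr_sumr; apply: eq_bigr => a _.
  by rewrite mulrC (mulrC a); ring.
rewrite (eq_bigr (fun x => v x * ((x == 1)%:R * \sum_a b a) - Gs b * (v x * b (1 - x^-1)^-1))).
  rewrite sumrB -mulr_sumr; congr (_ - _).
  rewrite (eq_bigr (fun i => (v i * \sum_a b a) * (i == 1)%:R)); last by move=> i _; ring.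
  by rewrite sum_delta v1 mul1r.
move=> x _; rewrite subr_eq0 eq_sym invr_eq1; ring.
Qed.

Lemma dicho {f : F -> algC} : Mul f ->
  \sum_x f x = 0 \/ (forall x, x != 0 -> f x = 1).
Proof.
case=> fM f1 f0 fV.
case: (boolP [exists x, (x != 0) && (f x != 1)]) => [/existsP [u /andP [u0 fu]] | /existsPn h].
  left; set S := \sum_x f x.
  have h : f u * S = S.
    rewrite /S mulr_sumr [RHS](reindex_inj (mulfI u0)) /=.
    by apply: eq_bigr => x _; rewrite fM.
  have : (f u - 1) * S = 0 by rewrite mulrBl h mul1r subrr.
  by move/eqP; rewrite mulf_eq0 subr_eq0 (negbTE fu) => /eqP.
right => x x0; have := h x; rewrite x0 /= negbK => /eqP //.
Qed.

Lemma triv_one {f : F -> algC} : Mul f -> (forall x, x != 0 -> f x = 1) -> f =1 onef.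
Proof.
case=> _ _ f0 _ h x; rewrite /onef; have [->|x0] := eqVneq x 0; first by rewrite f0.
by rewrite h.
Qed.

Lemma one_split (x : F) : onef x = 1 - (x == 0)%:R.
Proof. by rewrite /onef; case: (x == 0); rewrite ?subr0 ?subrr. Qed.

Lemma sum_one : \sum_(x : F) onef x = n.
Proof.
rewrite (eq_bigr _ (fun x _ => one_split x)) sumrB.
rewrite [X in _ - X](eq_bigr (fun x => 1 * (x == 0)%:R)); last by move=> x _; rewrite mul1r.
by rewrite sum_delta sumr_const /nn /qF.
Qed.

Lemma Gs_one : Gs onef = 1.
Proof.
rewrite /Gs (eq_bigr (fun x => psi x - psi x * (x == 0)%:R)).
  by rewrite sumrB sum_delta sum_psi0 psi0 sub0r opprK.
by move=> x _; rewrite one_split mulrBr mulr1.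
Qed.

Lemma lemA {f : F -> algC} : Mul f ->
  Gs f * Gs (fun x => (f x)^*) * f (-1) = q - \sum_x f x.
Proof.
move=> Mf; have := @lemB onef f Mul_one Mf.
rewrite (@Gs_ext (fun x => onef x * f x) f); last first.
  by move=> x; rewrite /onef; have [->|] := eqVneq x 0; [case: Mf => _ _ -> _; rewrite mulr0|rewrite mul1r].
move->; rewrite sum_one Gs_one mul1r.
rewrite (eq_bigr (fun x => f x - f x * (x == 1)%:R)).
  by rewrite sumrB sum_delta; case: Mf => _ -> _ _; rewrite /nn; ring.
move=> x _; rewrite one_split invr_eq0 subr_eq0 eq_sym invr_eq1; ring.
Qed.


Lemma Gs_triv {f : F -> algC} : Mul f -> (forall x, x != 0 -> f x = 1) -> Gs f = 1.
Proof. by move=> Mf h; rewrite (Gs_ext (triv_one Mf h)) Gs_one. Qed.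

Lemma Gs_neq0 {f : F -> algC} : Mul f -> Gs f != 0.
Proof.
move=> Mf; case: (dicho Mf) => [s0|h]; last by rewrite Gs_triv // oner_neq0.
apply/eqP => g0; have := lemA Mf; rewrite g0 !mul0r s0 subr0 => /esym/eqP.
by rewrite (negbTE q_neq0).
Qed.

Lemma Bnorm {b v : F -> algC} : Mul b -> Mul v ->
  Gs (fun x => b x * v x) / Gs b * (v (-1) * Gs (fun x => (v x)^*)) =
  \sum_a b a - \sum_x v x * b ((1 - x^-1)^-1).
Proof.
move=> Mb Mv; have gb := Gs_neq0 Mb.
have -> : Gs (fun x => b x * v x) / Gs b * (v (-1) * Gs (fun x => (v x)^*)) =
   (Gs (fun x => b x * v x) * Gs (fun x => (v x)^*) * v (-1)) / Gs b.
  by ring.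
rewrite lemB // mulrBl [X in _ - X]mulrC mulKf // ; congr (_ - _).
case: (dicho Mb) => [->|h]; first by rewrite mul0r.
by rewrite Gs_triv // invr1 mulr1.
Qed.

Lemma sum_nontriv (phi : 'CF(UG F)) : phi \is a linear_char -> phi != 1 ->
  \sum_x chx phi x = 0.
Proof.
move=> lin ne; case: (dicho (Mul_lin lin)) => // h.
case/eqP: ne; apply/cfunP => u; rewrite -chxE (triv_one (Mul_lin lin) h) -chx1 chxE //.
Qed.

Lemma Pinv (phi : 'CF(UG F)) : phi \is a linear_char ->
  (pochc psi 1 phi)^-1 = chx phi (-1) * Gs (fun x => (chx phi x)^*).
Proof.
move=> lin; have Mf := Mul_lin lin.
have g1 : Gs (chx 1) = 1 by rewrite (Gs_ext chx1) Gs_one.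
rewrite /pochc /gaussc mul1r !gaussE /delta eqxx expr1 g1 mulr1.
have [->|ne] := eqVneq phi 1.
  rewrite expr1 g1 mulr1 divff ?q_neq0 // invr1 chx1 /onef oppr_eq0 oner_neq0 mul1r.
  by rewrite (Gs_ext (g := onef)) ?Gs_one // => x; rewrite chx1 /onef conjC_nat.
rewrite expr0 mul1r invf_div.
have := lemA Mf; rewrite sum_nontriv // subr0 => <-.
have gn := Gs_neq0 Mf; by field.
Qed.


Lemma orth2 (al be : F -> algC) (p r : F -> F) :
  \sum_(i : Iirr (UG F)) (\sum_a al a * chx 'chi_i (p a)) * (\sum_b be b * chx 'chi_i (r b))
  = n * \sum_a \sum_b al a * be b * (p a * r b == 1)%:R.
Proof.
transitivity (\sum_(i : Iirr (UG F)) \sum_a \sum_b al a * be b * chx 'chi_i (p a * r b)).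
  apply: eq_bigr => i _; rewrite mulr_suml; apply: eq_bigr => a _.
  rewrite mulr_sumr; apply: eq_bigr => b _; case: (Mul_chi i) => -> _ _ _; ring.
rewrite exchange_big mulr_sumr; apply: eq_bigr => a _.
rewrite exchange_big mulr_sumr; apply: eq_bigr => b _.
by rewrite -mulr_sumr orthoI; ring.
Qed.

Lemma cinj : injective (fun x : F => 1 - x^-1).
Proof. by move=> x y /addrI /oppr_inj /invr_inj. Qed.

Lemma cond_c (x y : F) :
  ((1 - x^-1) * (1 - y^-1)^-1 == 1) = ((1 - y^-1 != 0) && (x == y)).
Proof.
have [cy|cy] := eqVneq (1 - y^-1) 0.
  by rewrite cy invr0 mulr0 eq_sym oner_eq0.
rewrite /= -(inj_eq cinj); apply/idP/idP => /eqP h; apply/eqP.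
  by rewrite -(divfK cy (1 - x^-1)) h mul1r.
by rewrite h mulfV.
Qed.

Definition Kf (w f : F -> algC) := \sum_x f x * w (1 - x^-1).

Lemma eta_sum (fi fj w : F -> algC) : Mul w -> \sum_x w x = 0 ->
  \sum_(eta : Iirr (UG F))
    ((\sum_a (chx 'chi_eta a)^* - \sum_x fi x * (chx 'chi_eta ((1 - x^-1)^-1))^*) *
     (\sum_a (w a)^* * chx 'chi_eta a -
       \sum_x fj x * ((w ((1 - x^-1)^-1))^* * chx 'chi_eta ((1 - x^-1)^-1))))
  = n * (Kf w (fun x => fi x * fj x) - Kf w fi - Kf w fj).
Proof.
case=> wM w1 w0 wV ws.
have eV (i : Iirr (UG F)) y : (chx 'chi_i y)^* = chx 'chi_i y^-1.
  by case: (Mul_chi i) => _ _ _ ->.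
set X := LHS.
have -> : X = \sum_(eta : Iirr (UG F))
    ((\sum_a 1 * chx 'chi_eta (a^-1)) * (\sum_b (w b)^* * chx 'chi_eta b)
   - (\sum_a 1 * chx 'chi_eta (a^-1)) *
        (\sum_y (fj y * (w ((1 - y^-1)^-1))^*) * chx 'chi_eta ((1 - y^-1)^-1))
   - (\sum_x fi x * chx 'chi_eta ((1 - x^-1)^-1)^-1) * (\sum_b (w b)^* * chx 'chi_eta b)
   + (\sum_x fi x * chx 'chi_eta ((1 - x^-1)^-1)^-1) *
        (\sum_y (fj y * (w ((1 - y^-1)^-1))^*) * chx 'chi_eta ((1 - y^-1)^-1))).
  rewrite /X; apply: eq_bigr => eta _.
  have -> : \sum_a (chx 'chi_eta a)^* = \sum_a 1 * chx 'chi_eta (a^-1).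
    by apply: eq_bigr => a _; rewrite eV mul1r.
  have -> : \sum_x fi x * (chx 'chi_eta ((1 - x^-1)^-1))^* =
            \sum_x fi x * chx 'chi_eta ((1 - x^-1)^-1)^-1.
    by apply: eq_bigr => x _; rewrite eV.
  have -> : \sum_x fj x * ((w ((1 - x^-1)^-1))^* * chx 'chi_eta ((1 - x^-1)^-1)) =
      \sum_y (fj y * (w ((1 - y^-1)^-1))^*) * chx 'chi_eta ((1 - y^-1)^-1).
    by apply: eq_bigr => x _; rewrite mulrA.
  ring.
rewrite /X big_split /= sumrB sumrB !orth2.
have hw y : (y != 0)%:R * w y = w y.
  by have [->|] := eqVneq y 0; rewrite ?w0 ?mulr0 ?mul1r.
have wc y : (w y)^* = w y^-1 by rewrite wV.
have -> : \sum_a \sum_b 1 * (w b)^* * (a^-1 * b == 1)%:R = 0.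
  rewrite (eq_bigr (fun a => (a^-1 != 0)%:R * (w a^-1^-1)^*)); last first.
    by move=> a _; rewrite -(delta1 (fun b => (w b)^*)); apply: eq_bigr => b _; rewrite mul1r.
  rewrite (eq_bigr (fun a => (w a)^*)); last first.
    by move=> a _; rewrite invrK !wc hw.
  by rewrite -rmorph_sum ws rmorph0.
set T2 := (X in _ - n * X - _ + _ = _).
have -> : T2 = Kf w fj.
  rewrite /T2 exchange_big; apply: eq_bigr => b _.
  rewrite (eq_bigr (fun a => (fj b * (w ((1 - b^-1)^-1))^*) * (a^-1 * (1 - b^-1)^-1 == 1)%:R)); last first.
    by move=> a _; rewrite mul1r.
  by rewrite delta2 wc invrK mulrCA invr_eq0 hw.
set T3 := (X in _ - _ - n * X + _ = _).
have -> : T3 = Kf w fi.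
  rewrite /T3; apply: eq_bigr => a _; rewrite invrK delta1 wc invrK mulrCA hw //.
set T4 := (X in _ - _ - _ + n * X = _).
have -> : T4 = Kf w (fun x => fi x * fj x).
  rewrite /T4 exchange_big; apply: eq_bigr => b _.
  rewrite (eq_bigr (fun a => (fi a * ((1 - b^-1 != 0)%:R * (fj b * w (1 - b^-1)))) * (a == b)%:R)); last first.
    move=> a _; rewrite invrK cond_c wc invrK.
    by rewrite -mulnb natrM; ring.
  by rewrite sum_delta (mulrCA (_%:R)) hw mulrA.
by ring.
Qed.


Lemma Core (w : F -> algC) (s : F) :
  \sum_(i : Iirr (UG F)) Gs (fun x => (chx 'chi_i x)^*) * chx 'chi_i s *
     (\sum_a w a * chx 'chi_i a)
  = - n * \sum_a w a * ((s * a != 0)%:R * psi (s * a)).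
Proof.
transitivity (\sum_(i : Iirr (UG F)) (\sum_b (- psi b) * chx 'chi_i (b^-1 * s)) *
     (\sum_a w a * chx 'chi_i (id a))).
  apply: eq_bigr => i _; congr (_ * _); rewrite /Gs mulNr mulr_suml -sumrN.
  apply: eq_bigr => b _; case: (Mul_chi i) => M _ _ V; rewrite M V; ring.
rewrite orth2 exchange_big /= mulr_sumr mulNr mulr_sumr -sumrN; apply: eq_bigr => a _.
rewrite (eq_bigr (fun b => (- psi b * w a) * (b^-1 * (s * a) == 1)%:R)); last first.
  by move=> b _; rewrite mulrA.
by rewrite delta2; ring.
Qed.

Lemma Dlem s t :
  \sum_(i : Iirr (UG F)) \sum_(j : Iirr (UG F))
    Gs (fun x => chx 'chi_i x * chx 'chi_j x) * Gs (fun x => (chx 'chi_i x)^*) *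
    Gs (fun x => (chx 'chi_j x)^*) * chx 'chi_i s * chx 'chi_j t
  = - n ^+ 2 * \sum_a psi a * ((t * a != 0)%:R * psi (t * a)) * ((s * a != 0)%:R * psi (s * a)).
Proof.
set W := fun a => psi a * ((t * a != 0)%:R * psi (t * a)).
transitivity (\sum_(i : Iirr (UG F)) Gs (fun x => (chx 'chi_i x)^*) * chx 'chi_i s *
     (n * \sum_a W a * chx 'chi_i a)).
  apply: eq_bigr => i _.
  transitivity (Gs (fun x => (chx 'chi_i x)^*) * chx 'chi_i s *
    \sum_(j : Iirr (UG F)) Gs (fun x => (chx 'chi_j x)^*) * chx 'chi_j t *
       (\sum_a (- psi a * chx 'chi_i a) * chx 'chi_j a)).
    rewrite mulr_sumr; apply: eq_bigr => j _.
    have -> : Gs (fun x => chx 'chi_i x * chx 'chi_j x) =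
      \sum_a (- psi a * chx 'chi_i a) * chx 'chi_j a.
      by rewrite /Gs -sumrN; apply: eq_bigr => a _; ring.
    ring.
  congr (_ * _); rewrite Core mulNr -mulrN -sumrN; congr (_ * _); apply: eq_bigr => a _.
  rewrite /W; ring.
rewrite (eq_bigr (fun i => n * (Gs (fun x => (chx 'chi_i x)^*) * chx 'chi_i s *
     (\sum_a W a * chx 'chi_i a)))); last by move=> i _; ring.
rewrite -mulr_sumr Core /W; ring.
Qed.

Lemma sum_psi_nz k : \sum_a (a != 0)%:R * psi (k * a) = q * (k == 0)%:R - 1.
Proof.
rewrite -sum_psi (eq_bigr (fun a => psi (k * a) - psi (k * a) * (a == 0)%:R)).
  by rewrite sumrB sum_delta mulr0 psi0.
by move=> a _; rewrite -[(a != 0)%:R]/(onef a) one_split; ring.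
Qed.

Lemma Dval s t : s != 0 -> t != 0 ->
  \sum_a psi a * ((t * a != 0)%:R * psi (t * a)) * ((s * a != 0)%:R * psi (s * a))
  = q * (1 + t + s == 0)%:R - 1.
Proof.
move=> s0 t0; rewrite -sum_psi_nz; apply: eq_bigr => a _.
rewrite !mulf_eq0 (negbTE s0) (negbTE t0) /=.
rewrite (_ : (1 + t + s) * a = a + t * a + s * a); last by ring.
rewrite !psiD; case: (a == 0); rewrite /=; ring.
Qed.

Lemma Dzero s t : (s == 0) || (t == 0) ->
  \sum_a psi a * ((t * a != 0)%:R * psi (t * a)) * ((s * a != 0)%:R * psi (s * a)) = 0.
Proof.
case/orP => /eqP ->; rewrite big1 // => a _; rewrite mul0r eqxx /=; ring.
Qed.

Definition B1 (eta i : Iirr (UG F)) :=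
  \sum_a (chx 'chi_eta a)^* - \sum_x chx 'chi_i x * (chx 'chi_eta ((1 - x^-1)^-1))^*.
Definition B2 (nu eta j : Iirr (UG F)) :=
  \sum_a (chx 'chi_nu a)^* * chx 'chi_eta a -
  \sum_x chx 'chi_j x * ((chx 'chi_nu ((1 - x^-1)^-1))^* * chx 'chi_eta ((1 - x^-1)^-1)).
Definition Tij (h : F) (i j : Iirr (UG F)) :=
  Gs (fun x => chx 'chi_i x * chx 'chi_j x) *
  (chx 'chi_i (-1) * Gs (fun x => (chx 'chi_i x)^*)) *
  (chx 'chi_j (-1) * Gs (fun x => (chx 'chi_j x)^*)) * chx 'chi_i h * chx 'chi_j h.

Lemma eta_sum' (nu i j : Iirr (UG F)) : 'chi_nu != 1 ->
  \sum_(eta : Iirr (UG F)) B1 eta i * B2 nu eta j =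
  n * (Kf (chx 'chi_nu) (fun x => chx 'chi_i x * chx 'chi_j x)
       - Kf (chx 'chi_nu) (chx 'chi_i) - Kf (chx 'chi_nu) (chx 'chi_j)).
Proof.
move=> ne; have H := (@eta_sum (chx 'chi_i) (chx 'chi_j) (chx 'chi_nu) (Mul_chi nu) (sum_nontriv _ (lin_irr nu) ne)).
by rewrite /B1 /B2 H.
Qed.

Lemma summand (h : F) (nu eta i j : Iirr (UG F)) :
  poch psi 1 ('chi_i * 'chi_j) * poch psi ('chi_eta)^*%CF 'chi_i *
  poch psi (('chi_nu)^*%CF * 'chi_eta) 'chi_j /
  (pochc psi 1 'chi_i * pochc psi 1 'chi_j * pochc psi 1 'chi_i * pochc psi 1 'chi_j) *
  chx 'chi_i h * chx 'chi_j h = Tij h i j * B1 eta i * B2 nu eta j.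
Proof.
have g1 : Gs (chx 1) = 1 by rewrite (Gs_ext chx1) Gs_one.
have Me := Mul_chi eta; have Mn := Mul_chi nu.
have E1 := Bnorm (Mul_C Me) (Mul_chi i).
have E2 := Bnorm (Mul_M (Mul_C Mn) Me) (Mul_chi j).
rewrite /poch mul1r !gaussE g1 divr1.
have G0 : Gs (chx ('chi_i * 'chi_j)) = Gs (fun x => chx 'chi_i x * chx 'chi_j x).
  by apply: Gs_ext => x; rewrite chxM.
have G1 : Gs (chx (('chi_eta)^*%CF * 'chi_i)) = Gs (fun x => (chx 'chi_eta x)^* * chx 'chi_i x).
  by apply: Gs_ext => x; rewrite chxM chxC.
have G2 : Gs (chx ('chi_eta)^*%CF) = Gs (fun x => (chx 'chi_eta x)^*).
  by apply: Gs_ext => x; rewrite chxC.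
have G3 : Gs (chx (('chi_nu)^*%CF * 'chi_eta * 'chi_j)) =
    Gs (fun x => (chx 'chi_nu x)^* * chx 'chi_eta x * chx 'chi_j x).
  by apply: Gs_ext => x; rewrite !chxM chxC.
have G4 : Gs (chx (('chi_nu)^*%CF * 'chi_eta)) = Gs (fun x => (chx 'chi_nu x)^* * chx 'chi_eta x).
  by apply: Gs_ext => x; rewrite chxM chxC.
rewrite G0 G1 G2 G3 G4.
have Pi := Pinv _ (lin_irr i); have Pj := Pinv _ (lin_irr j).
move: (pochc psi 1 'chi_i) (pochc psi 1 'chi_j) Pi Pj => pi pj Pi Pj.
rewrite !invfM Pi Pj.
rewrite /B1 /B2 -E1 -E2 /Tij; ring.
Qed.

Lemma Tterm (w : F -> algC) (T : Iirr (UG F) -> Iirr (UG F) -> algC)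
  (g : Iirr (UG F) -> Iirr (UG F) -> F -> algC) (sg tg : F -> F) :
  Mul w -> \sum_x w x = 0 ->
  (forall i j x, T i j * g i j x =
     Gs (fun x => chx 'chi_i x * chx 'chi_j x) * Gs (fun x => (chx 'chi_i x)^*) *
     Gs (fun x => (chx 'chi_j x)^*) * chx 'chi_i (sg x) * chx 'chi_j (tg x)) ->
  (forall x, x != 0 -> x != 1 -> [&& sg x != 0, tg x != 0 & 1 + tg x + sg x != 0]) ->
  (sg 0 == 0) || (tg 0 == 0) ->
  \sum_i \sum_j T i j * Kf w (g i j) = - n ^+ 2.
Proof.
move=> Mw ws hT hst h0; case: (Mw) => wM w1 w0 wV.
transitivity (\sum_x w (1 - x^-1) * \sum_(i : Iirr (UG F)) \sum_(j : Iirr (UG F))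
     Gs (fun x => chx 'chi_i x * chx 'chi_j x) * Gs (fun x => (chx 'chi_i x)^*) *
     Gs (fun x => (chx 'chi_j x)^*) * chx 'chi_i (sg x) * chx 'chi_j (tg x)).
  symmetry.
  rewrite (eq_bigr (fun x => \sum_(i : Iirr (UG F)) \sum_(j : Iirr (UG F)) w (1 - x^-1) *
     (Gs (fun x => chx 'chi_i x * chx 'chi_j x) * Gs (fun x => (chx 'chi_i x)^*) *
     Gs (fun x => (chx 'chi_j x)^*) * chx 'chi_i (sg x) * chx 'chi_j (tg x)))); last first.
    by move=> x _; rewrite mulr_sumr; apply: eq_bigr => i _; rewrite mulr_sumr.
  rewrite exchange_big; apply: eq_bigr => i _; rewrite exchange_big; apply: eq_bigr => j _.
  rewrite /Kf mulr_sumr; apply: eq_bigr => x _; rewrite -(hT i j x); ring.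
transitivity (\sum_x n ^+ 2 * (w (1 - x^-1) - w (1 - x^-1) * (x == 0)%:R)).
  apply: eq_bigr => x _; rewrite Dlem.
  have [->|x0] := eqVneq x 0.
    by rewrite Dzero //=; ring.
  have [->|x1] := eqVneq x 1.
    by rewrite invr1 subrr w0; ring.
  case/and3P: (hst x x0 x1) => s0 t0 st0.
  by rewrite Dval // (negbTE st0) /=; ring.
have wc0 : \sum_x w (1 - x^-1) = 0.
  by transitivity (\sum_x w x); [rewrite [RHS](reindex_inj cinj) | exact: ws].
by rewrite -mulr_sumr sumrB sum_delta wc0 invr0 subr0 w1; ring.
Qed.

Lemma main (nu : Iirr (UG F)) : (2%:R : F) != 0 -> 'chi_nu != 1 ->
  (1 - q)^-1 * \sum_(eta : Iirr (UG F))
     appellF2 psi 1 ('chi_eta)^*%CF (('chi_nu)^*%CF * 'chi_eta) 1 1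
       (2%:R)^-1 (2%:R)^-1 = -1.
Proof.
move=> h2 ne; set h : F := (2%:R)^-1.
have hn0 : h != 0 by rewrite invr_eq0.
have hh : h + h = 1 by rewrite -mulr2n -mulr_natr mulVf.
have m1 : (-1 : F) != 0 by rewrite oppr_eq0 oner_neq0.
rewrite /appellF2.
transitivity ((1 - q)^-1 * \sum_(eta : Iirr (UG F)) ((1 - q)^-2 *
   \sum_(i : Iirr (UG F)) \sum_(j : Iirr (UG F)) Tij h i j * B1 eta i * B2 nu eta j)).
  congr (_ * _); apply: eq_bigr => eta _; congr (_ * _); apply: eq_bigr => i _.
  by apply: eq_bigr => j _; exact: summand.
rewrite -mulr_sumr.
have E : \sum_(eta : Iirr (UG F)) \sum_(i : Iirr (UG F)) \sum_(j : Iirr (UG F))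
      Tij h i j * B1 eta i * B2 nu eta j =
    n * (\sum_(i : Iirr (UG F)) \sum_(j : Iirr (UG F)) Tij h i j *
            Kf (chx 'chi_nu) (fun x => chx 'chi_i x * chx 'chi_j x)
       - \sum_(i : Iirr (UG F)) \sum_(j : Iirr (UG F)) Tij h i j * Kf (chx 'chi_nu) (chx 'chi_i)
       - \sum_(i : Iirr (UG F)) \sum_(j : Iirr (UG F)) Tij h i j * Kf (chx 'chi_nu) (chx 'chi_j)).
  rewrite !mulrBr !mulr_sumr -!sumrB exchange_big; apply: eq_bigr => i _.
  rewrite !mulr_sumr -!sumrB exchange_big; apply: eq_bigr => j _.
  transitivity (Tij h i j * \sum_(eta : Iirr (UG F)) B1 eta i * B2 nu eta j).
    by rewrite mulr_sumr; apply: eq_bigr => eta _; ring.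
  by rewrite eta_sum' //; ring.
have Mn := Mul_chi nu; have sn := sum_nontriv _ (lin_irr nu) ne.
have TA : \sum_(i : Iirr (UG F)) \sum_(j : Iirr (UG F)) Tij h i j *
            Kf (chx 'chi_nu) (fun x => chx 'chi_i x * chx 'chi_j x) = - n ^+ 2.
  apply: (@Tterm _ _ (fun i j x => chx 'chi_i x * chx 'chi_j x)
                     (fun x => -1 * h * x) (fun x => -1 * h * x)) => //.
  - move=> i j x; rewrite /Tij; case: (Mul_chi i) => Mi _ _ _; case: (Mul_chi j) => Mj _ _ _.
    by rewrite !Mi !Mj; ring.
  - move=> x x0 x1; rewrite !mulf_neq0 //=.
    rewrite (_ : 1 + -1 * h * x + -1 * h * x = 1 - (h + h) * x); last by ring.
    by rewrite hh mul1r subr_eq0 eq_sym.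
  - by rewrite mulr0 eqxx.
have TB : \sum_(i : Iirr (UG F)) \sum_(j : Iirr (UG F)) Tij h i j *
            Kf (chx 'chi_nu) (chx 'chi_i) = - n ^+ 2.
  apply: (@Tterm _ _ (fun i j x => chx 'chi_i x)
                     (fun x => -1 * h * x) (fun x => -1 * h)) => //.
  - move=> i j x; rewrite /Tij; case: (Mul_chi i) => Mi _ _ _; case: (Mul_chi j) => Mj _ _ _.
    by rewrite !Mi !Mj; ring.
  - move=> x x0 x1; rewrite !mulf_neq0 //=.
    rewrite (_ : 1 + -1 * h + -1 * h * x = h * (1 - x) + (1 - (h + h))); last by ring.
    by rewrite hh subrr addr0 mulf_neq0 // subr_eq0 eq_sym.
  - by rewrite mulr0 eqxx.
have TC : \sum_(i : Iirr (UG F)) \sum_(j : Iirr (UG F)) Tij h i j *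
            Kf (chx 'chi_nu) (chx 'chi_j) = - n ^+ 2.
  apply: (@Tterm _ _ (fun i j x => chx 'chi_j x)
                     (fun x => -1 * h) (fun x => -1 * h * x)) => //.
  - move=> i j x; rewrite /Tij; case: (Mul_chi i) => Mi _ _ _; case: (Mul_chi j) => Mj _ _ _.
    by rewrite !Mi !Mj; ring.
  - move=> x x0 x1; rewrite !mulf_neq0 //=.
    rewrite (_ : 1 + -1 * h * x + -1 * h = h * (1 - x) + (1 - (h + h))); last by ring.
    by rewrite hh subrr addr0 mulf_neq0 // subr_eq0 eq_sym.
  - by rewrite mulr0 eqxx orbT.
rewrite E TA TB TC (_ : 1 - q = - n); last by rewrite /nn; ring.
have := n_neq0; move: n => m m0; field; exact: m0.
Qed.

End Psi.


Theorem corollary3p8 (F : finFieldType) (psi : F -> algC) (nu : Iirr (UG F)) :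
  (2%N \notin [pchar F]) ->
  additive_char psi ->
  'chi_nu != 1 ->
  (1 - qF F)^-1 * \sum_(eta : Iirr (UG F))
     appellF2 psi 1 ('chi_eta)^*%CF (('chi_nu)^*%CF * 'chi_eta) 1 1
       (2%:R)^-1 (2%:R)^-1 = -1.
Proof.
move=> h2 [psiD [psi0 psinz]] ne.
have h2' : (2%:R : F) != 0.
  by apply/negP => h; case/negP: h2; rewrite inE /= h.
exact: (@main F psi psiD psi0 psinz nu h2' ne).
Qed.
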